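(* For each fixed positive integer $K$, with $\theta=(K,P)$, $$\frac{C_{\rm K}(\theta)}{p(\theta)}\sim 1+\frac{P}{K^3}\qquad (P\to\infty).$$
   Context: For positive integers $K\le P$, $\theta=(K,P)$: $q(\theta)=\binom{P-K}{K}/\binom{P}{K}$ if $2K\le P$ and $0$ otherwise; $p(\theta)=1-q(\theta)$; $r(\theta)=\binom{P-2K}{K}/\binom{P}{K}$ if $3K\le P$ and $0$ otherwise; $\beta(\theta)=(1-q)^3+q^3-qr$; $C_{\rm K}(\theta)=\beta(\theta)/(1-q(\theta))^2$ is the clustering coefficient $\mathbb{P}[E_{12}\mid E_{13}\cap E_{23}]$ of the random key graph (nodes receive i.i.d. uniform $K$-subsets of $\{1,\dots,P\}$, adjacent iff subsets intersect). Note $p(\theta)$ equals the clustering coefficient $C_{\rm ER}(p(\theta))$ of the Erdős–Rényi graph with edge probability $p(\theta)$. *)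

(* Defs.v *)
From Stdlib Require Import Reals Lra Lia Arith.
Open Scope R_scope.

(* theta = (K,P); binomial coefficients are the real-valued Binomial.C *)
Definition qK (K P : nat) : R :=
  if (2 * K <=? P)%nat then C (P - K) K / C P K else 0.
Definition pK (K P : nat) : R := 1 - qK K P.
Definition rK (K P : nat) : R :=
  if (3 * K <=? P)%nat then C (P - 2 * K) K / C P K else 0.
Definition betaK (K P : nat) : R :=
  (1 - qK K P) ^ 3 + qK K P ^ 3 - qK K P * rK K P.
Definition CK (K P : nat) : R := betaK K P / (1 - qK K P) ^ 2.

(* Main.v *)
Require Import Defs.
From Stdlib Require Import Reals Lra Lia Arith.
From Coquelicot Require Import Coquelicot.
Open Scope R_scope.

Fixpoint ffR (x : R) (n : nat) : R :=
  match n with O => 1 | S n => ffR x n * (x - INR n) end.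

Lemma C_ff m n : (n <= m)%nat -> Binomial.C m n = ffR (INR m) n / INR (fact n).
Proof.
  induction n as [|n IH]; intros H.
  - unfold Binomial.C; rewrite Nat.sub_0_r; simpl. field. apply INR_fact_neq_0.
  - rewrite pascal_step3 by lia. rewrite IH by lia. simpl ffR.
    rewrite minus_INR by lia.
    change (fact (S n)) with (S n * fact n)%nat. rewrite mult_INR.
    field. split. apply INR_fact_neq_0. rewrite S_INR. pose proof (pos_INR n). lra.
Qed.

Lemma lim_eq (u : nat -> R) (a b : R) : is_lim_seq u a -> a = b -> is_lim_seq u b.
Proof. intros H <-; exact H. Qed.

Lemma lim_cube u (l : R) : is_lim_seq u l -> is_lim_seq (fun n => u n ^ 3) (l ^ 3).
Proof.
  intros H. eapply is_lim_seq_ext with (u := fun n => u n * (u n * u n)).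
  intros; ring. eapply lim_eq. apply is_lim_seq_mult'. exact H.
  apply is_lim_seq_mult'; exact H. ring.
Qed.

Section S.
Variable m : nat.
Hypothesis hm : (1 <= m)%nat.
Let x (N : nat) : R := INR (N + m).

Lemma xpos N : 0 < x N.
Proof. unfold x. apply lt_0_INR. lia. Qed.

Lemma hlim : is_lim_seq (fun N => / x N) 0.
Proof.
  assert (H := is_lim_seq_INR).
  apply (is_lim_seq_incr_n _ m) in H.
  apply is_lim_seq_inv in H; [|discriminate].
  exact H.
Qed.

Lemma L1 c n : is_lim_seq (fun N => ffR (x N - c) n / x N ^ n) 1.
Proof.
  induction n as [|n IH].
  - simpl. eapply is_lim_seq_ext; [|apply is_lim_seq_const]. intros; simpl; field.
  - eapply is_lim_seq_ext with
      (u := fun N => ffR (x N - c) n / x N ^ n * (1 - (c + INR n) * / x N)).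
    { intros N. simpl. pose proof (xpos N). assert (x N ^ n <> 0) by (apply pow_nonzero; lra). field. split; lra. }
    eapply lim_eq.
    apply is_lim_seq_mult'. exact IH.
    apply is_lim_seq_minus'. apply is_lim_seq_const.
    exact (is_lim_seq_scal_l _ (c + INR n) _ hlim).
    simpl. ring.
Qed.

Lemma L2 k n : is_lim_seq (fun N => x N * (ffR (x N) n - ffR (x N - k) n) / x N ^ n) (INR n * k).
Proof.
  induction n as [|n IH].
  - simpl. eapply is_lim_seq_ext; [|apply is_lim_seq_const]. intros; simpl; field.
  - eapply is_lim_seq_ext with
      (u := fun N => x N * (ffR (x N) n - ffR (x N - k) n) / x N ^ n * (1 - INR n * / x N)
                     + k * (ffR (x N - k) n / x N ^ n)).
    { intros N. simpl. pose proof (xpos N). assert (x N ^ n <> 0) by (apply pow_nonzero; lra). field. split; lra. }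
    eapply lim_eq.
    apply is_lim_seq_plus'. apply is_lim_seq_mult'. exact IH.
    apply is_lim_seq_minus'. apply is_lim_seq_const.
    exact (is_lim_seq_scal_l _ (INR n) _ hlim).
    exact (is_lim_seq_scal_l _ k _ (L1 k n)).
    rewrite S_INR. simpl. ring.
Qed.

Lemma L3 k n : is_lim_seq (fun N => x N ^ 2 * (ffR (x N - k) n ^ 2
     - ffR (x N - 2 * k) n * ffR (x N) n) / (x N ^ n) ^ 2) (INR n * k ^ 2).
Proof.
  induction n as [|n IH].
  - simpl. eapply is_lim_seq_ext; [|apply is_lim_seq_const]. intros; simpl; field.
  - eapply is_lim_seq_ext with
      (u := fun N => x N ^ 2 * (ffR (x N - k) n ^ 2
         - ffR (x N - 2 * k) n * ffR (x N) n) / (x N ^ n) ^ 2 *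
         ((1 - INR n * / x N) ^ 2 - 2 * k * / x N * (1 - INR n * / x N))
         + k ^ 2 * (ffR (x N - k) n / x N ^ n) ^ 2).
    { intros N. simpl. pose proof (xpos N). assert (x N ^ n <> 0) by (apply pow_nonzero; lra). field. split; lra. }
    assert (Hn := is_lim_seq_scal_l _ (INR n) _ hlim).
    assert (Hk := is_lim_seq_scal_l _ (2 * k) _ hlim).
    assert (H1 : is_lim_seq (fun N => 1 - INR n * / x N) 1).
    { eapply lim_eq. apply is_lim_seq_minus'. apply is_lim_seq_const. exact Hn. simpl; ring. }
    eapply lim_eq.
    apply is_lim_seq_plus'. apply is_lim_seq_mult'. exact IH.
    apply is_lim_seq_minus'.
    { eapply is_lim_seq_ext with (u := fun N => (1 - INR n * / x N) * (1 - INR n * / x N)).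
      intros; ring. apply is_lim_seq_mult'; exact H1. }
    { eapply is_lim_seq_ext with (u := fun N => 2 * k * / x N * (1 - INR n * / x N)).
      intros; ring. apply is_lim_seq_mult'. exact Hk. exact H1. }
    { eapply is_lim_seq_ext with (u := fun N => k ^ 2 * ((ffR (x N - k) n / x N ^ n) * (ffR (x N - k) n / x N ^ n))).
      intros; ring. apply is_lim_seq_scal_l with (a := k ^ 2) (lu := Finite (1 * 1)).
      apply is_lim_seq_mult'; apply L1. }
    rewrite S_INR. simpl. ring.
Qed.

End S.

Lemma posff (K : nat) (x : R) n : (n <= K)%nat -> 3 * INR K + 1 <= x ->
  0 < ffR (x - INR K) n /\ ffR (x - INR K) n <= ffR x n /\
  ((0 < n)%nat -> ffR (x - INR K) n < ffR x n).
Proof.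
  intros Hn Hx. induction n as [|n IH].
  - simpl. split; [lra|split; [lra|intros; lia]].
  - destruct IH as [H1 [H2 _]]; [lia|].
    assert (INR n + 1 <= INR K) by (rewrite <- S_INR; apply le_INR; lia).
    pose proof (pos_INR n).
    simpl. split; [|split; [|intros _]]; nra.
Qed.

Lemma alg x k A B Q X f : 0 < x -> 0 < k -> 0 < X -> 0 < Q -> A < Q -> f <> 0 ->
  (((1 - (A/f)/(Q/f)) ^ 3 + ((A/f)/(Q/f)) ^ 3 - (A/f)/(Q/f) * ((B/f)/(Q/f)))
     / (1 - (A/f)/(Q/f)) ^ 2 / (1 - (A/f)/(Q/f))) / (1 + x / k ^ 3)
  = (/ x + A / X * (x ^ 2 * (A ^ 2 - B * Q) / X ^ 2) / (x * (Q - A) / X) ^ 3)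
     / (/ x + / k ^ 3).
Proof.
  intros. assert (k ^ 3 > 0) by (apply pow_lt; lra).
  assert (1 + x / k ^ 3 > 0). { assert (x / k^3 > 0) by (apply Rdiv_lt_0_compat; lra). lra. }
  assert (/ x + / k ^ 3 > 0). { assert (/x > 0) by (apply Rinv_0_lt_compat; lra).
     assert (/k^3 > 0) by (apply Rinv_0_lt_compat; lra). lra. }
  assert (1 - (A/f)/(Q/f) <> 0).
  { replace ((A/f)/(Q/f)) with (A/Q) by (field; split; lra).
    replace (1 - A/Q) with ((Q-A)/Q) by (field; lra).
    apply Rgt_not_eq. apply Rdiv_lt_0_compat; lra. }
  field. repeat split; try lra.
Qed.

Theorem corollary2 (K : nat) (hK : (1 <= K)%nat) :
  Un_cv (fun P : nat => (CK K P / pK K P) / (1 + INR P / INR K ^ 3)) 1.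
Proof.
  apply is_lim_seq_Reals.
  apply (is_lim_seq_incr_n _ (3 * K + 1)).
  set (m := (3 * K + 1)%nat).
  set (k := INR K).
  assert (hk : 0 < k) by (apply lt_0_INR; lia).
  assert (hm : (1 <= m)%nat) by (unfold m; lia).
  eapply is_lim_seq_ext with
    (u := fun N => (/ INR (N + m) + ffR (INR (N + m) - k) K / INR (N + m) ^ K *
      (INR (N + m) ^ 2 * (ffR (INR (N + m) - k) K ^ 2 - ffR (INR (N + m) - 2 * k) K * ffR (INR (N + m)) K)
         / (INR (N + m) ^ K) ^ 2)
      / (INR (N + m) * (ffR (INR (N + m)) K - ffR (INR (N + m) - k) K) / INR (N + m) ^ K) ^ 3)
      / (/ INR (N + m) + / k ^ 3)).
  { intros N. 
    assert (Hx : 3 * k + 1 <= INR (N + m)).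
    { unfold m, k. rewrite plus_INR, plus_INR, mult_INR. simpl. pose proof (pos_INR N). lra. }
    destruct (posff K (INR (N + m)) K (le_n K) Hx) as [HA1 [_ HA3]].
    specialize (HA3 hK).
    unfold CK, pK, betaK, qK, rK.
    replace (2 * K <=? N + m)%nat with true by (symmetry; apply Nat.leb_le; unfold m; lia).
    replace (3 * K <=? N + m)%nat with true by (symmetry; apply Nat.leb_le; unfold m; lia).
    rewrite !C_ff by (unfold m; lia).
    rewrite !minus_INR by (unfold m; lia). rewrite mult_INR.
    change (INR 2) with 2. fold k.
    fold k in HA1, HA3. symmetry. apply alg; try lra.
    apply pow_lt; lra. apply INR_fact_neq_0. }
  eapply lim_eq.
  apply is_lim_seq_div'.
  apply is_lim_seq_plus'. apply (hlim m).
  apply is_lim_seq_div'. apply is_lim_seq_mult'. apply (L1 m hm). apply (L3 m hm). apply lim_cube. apply (L2 m hm).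
  { fold k. apply pow_nonzero. apply Rmult_integral_contrapositive; split; lra. }
  apply is_lim_seq_plus'. apply (hlim m). apply is_lim_seq_const.
  { assert (/k^3 > 0) by (apply Rinv_0_lt_compat; apply pow_lt; lra). lra. }
  fold k. field. lra.
Qed.
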